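(* Let $L$ be a finite-dimensional completely solvable Lie algebra over any field $F$. Then $\mathrm{nil}(L)\subseteq N(L)$.
   Context: $L$ is completely solvable if $L^2=[L,L]$ is nilpotent. $N(L)$ is the nilradical (largest nilpotent ideal) of $L$. $\langle a,b\rangle$ denotes the Lie subalgebra generated by $a,b$, and $\mathrm{nil}(L)=\{x\in L\mid \langle h,x\rangle \text{ is nilpotent for all } h\in L\}$. *)

(* Defs.v *)
From HB Require Import structures.
From mathcomp Require Import all_boot all_order all_algebra.
Set Implicit Arguments. Unset Strict Implicit. Unset Printing Implicit Defensive.
Import GRing.Theory.
Local Open Scope ring_scope.


Record lie_bracket (F : fieldType) (V : vectType F) (br : V -> V -> V) : Prop := {
  lie_linl : forall (a : F) (x y z : V), br (a *: x + y) z = a *: br x z + br y z;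
  lie_linr : forall (a : F) (x y z : V), br z (a *: x + y) = a *: br z x + br z y;
  lie_alt  : forall x : V, br x x = 0;
  lie_jacobi : forall x y z : V, br x (br y z) + br y (br z x) + br z (br x y) = 0
}.

Section LieDefs.
Variables (F : fieldType) (V : vectType F) (br : V -> V -> V).

(* [A, B] = span of all brackets [a, b], a in A, b in B
   (computed on bases, which is equivalent by bilinearity). *)
Definition brs (A B : {vspace V}) : {vspace V} :=
  <<[seq br u v | u <- vbasis A, v <- vbasis B]>>%VS.

Fixpoint lcs (S : {vspace V}) (k : nat) : {vspace V} :=
  if k is k'.+1 then brs S (lcs S k') else S.

Definition lie_nilpotent (S : {vspace V}) : Prop := exists n, lcs S n = 0%VS.

Definition lie_ideal (I : {vspace V}) : Prop := (brs fullv I <= I)%VS.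

Definition completely_solvable : Prop := lie_nilpotent (brs fullv fullv).

(* subalgebra generated by a and b: close span{a,b} under brackets;
   S_0 = span{a,b}, S_{k+1} = S_k + [S_k, S_k]; the chain stabilizes
   after at most dim V steps. *)
Fixpoint gen_iter (a b : V) (k : nat) : {vspace V} :=
  if k is k'.+1 then (gen_iter a b k' + brs (gen_iter a b k') (gen_iter a b k'))%VS
  else <<[:: a; b]>>%VS.

Definition lie_gen (a b : V) : {vspace V} := gen_iter a b (\dim (fullv : {vspace V})).

Definition nil_set (x : V) : Prop := forall h : V, lie_nilpotent (lie_gen h x).

Definition is_nilradical (N : {vspace V}) : Prop :=
  [/\ lie_ideal N, lie_nilpotent N &
      forall I : {vspace V}, lie_ideal I -> lie_nilpotent I -> (I <= N)%VS].

End LieDefs.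

(* Main.v *)
Require Import Defs.
From HB Require Import structures.
From mathcomp Require Import all_boot all_order all_algebra.

Set Implicit Arguments. Unset Strict Implicit. Unset Printing Implicit Defensive.
Import GRing.Theory.
Local Open Scope ring_scope.

Section Helpers.
Variables (F : fieldType) (V : vectType F) (br : V -> V -> V).
Hypothesis hL : lie_bracket br.

Lemma span_ind (P : V -> Prop) (s : seq V) :
  P 0 -> (forall u v, P u -> P v -> P (u + v)) -> (forall c u, P u -> P (c *: u)) ->
  (forall v, v \in s -> P v) -> forall w, w \in <<s>>%VS -> P w.
Proof.
move=> P0 PD PZ; elim: s => [|a s IH] Hs w.
  by rewrite span_nil memv0 => /eqP ->.
rewrite span_cons => /memv_addP [u /vlineP [c ->] [v Hv ->]].
apply: PD; first by apply: PZ; apply: Hs; rewrite mem_head.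
by apply: IH => // z Hz; apply: Hs; rewrite inE Hz orbT.
Qed.

Lemma brDl x y z : br (x + y) z = br x z + br y z.
Proof. by have := lie_linl hL 1 x y z; rewrite !scale1r. Qed.
Lemma brDr x y z : br z (x + y) = br z x + br z y.
Proof. by have := lie_linr hL 1 x y z; rewrite !scale1r. Qed.
Lemma br0l z : br 0 z = 0.
Proof. have := brDl 0 0 z; rewrite addr0 => /eqP; rewrite -{1}[br 0 z]addr0 (inj_eq (addrI _)) eq_sym => /eqP //. Qed.
Lemma br0r z : br z 0 = 0.
Proof. have := brDr 0 0 z; rewrite addr0 => /eqP; rewrite -{1}[br z 0]addr0 (inj_eq (addrI _)) eq_sym => /eqP //. Qed.
Lemma brZl c x z : br (c *: x) z = c *: br x z.
Proof. by rewrite -(addr0 (c *: x)) (lie_linl hL) br0l addr0. Qed.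
Lemma brZr c x z : br z (c *: x) = c *: br z x.
Proof. by rewrite -(addr0 (c *: x)) (lie_linr hL) br0r addr0. Qed.
Lemma brC u v : br u v = - br v u.
Proof.
apply/eqP; rewrite -subr_eq0 opprK.
have := lie_alt hL (u + v); rewrite brDl !brDr !(lie_alt hL) add0r addr0.
by move=> ->.
Qed.

Lemma brs_ind (P : V -> Prop) (A B : {vspace V}) :
  P 0 -> (forall u v, P u -> P v -> P (u + v)) -> (forall c u, P u -> P (c *: u)) ->
  (forall a b, a \in A -> b \in B -> P (br a b)) -> forall w, w \in brs br A B -> P w.
Proof.
move=> P0 PD PZ Hab; apply: span_ind => // v /allpairsP [[a b] [Ha Hb ->]] /=.
by apply: Hab; apply: vbasis_mem.
Qed.

Lemma mem_brs (A B : {vspace V}) a b : a \in A -> b \in B -> br a b \in brs br A B.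
Proof.
rewrite -{1}(span_basis (vbasisP A)) -{1}(span_basis (vbasisP B)) => Ha Hb.
move: a Ha b Hb.
apply: (span_ind (P := fun a => forall b, b \in <<vbasis B>>%VS -> br a b \in brs br A B)).
- by move=> b _; rewrite br0l mem0v.
- by move=> u v Hu Hv b Hb; rewrite brDl memvD ?Hu ?Hv.
- by move=> c u Hu b Hb; rewrite brZl memvZ ?Hu.
move=> a Ha.
apply: span_ind.
- by rewrite br0r mem0v.
- by move=> u v Hu Hv; rewrite brDr memvD.
- by move=> c u Hu; rewrite brZr memvZ.
move=> b Hb; apply: memv_span; apply/allpairsP; by exists (a, b).
Qed.

Lemma brs_sub (A B C : {vspace V}) :
  (forall a b, a \in A -> b \in B -> br a b \in C) -> (brs br A B <= C)%VS.
Proof.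
move=> H; apply/subvP; apply: brs_ind => //.
- exact: mem0v.
- by move=> u v; apply: memvD.
- by move=> c u; apply: memvZ.
Qed.

Lemma brs_mono (A B A' B' : {vspace V}) :
  (A <= A')%VS -> (B <= B')%VS -> (brs br A B <= brs br A' B')%VS.
Proof.
move=> /subvP HA /subvP HB; apply: brs_sub => a b Ha Hb; apply: mem_brs; auto.
Qed.

Lemma iter0v (x : V) j : iter j (br x) 0 = 0.
Proof. by elim: j => //= j ->; rewrite br0r. Qed.
Lemma iterDv (x : V) j u v : iter j (br x) (u + v) = iter j (br x) u + iter j (br x) v.
Proof. by elim: j => //= j ->; rewrite brDr. Qed.
Lemma iterZv (x : V) j c u : iter j (br x) (c *: u) = c *: iter j (br x) u.
Proof. by elim: j => //= j ->; rewrite brZr. Qed.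

End Helpers.

Section Main.
Variables (F : fieldType) (V : vectType F) (br : V -> V -> V).
Hypothesis hL : lie_bracket br.

Lemma brNr x z : br z (- x) = - br z x.
Proof. by rewrite -scaleN1r (brZr hL) scaleN1r. Qed.

Lemma adx_nil x : nil_set br x -> exists p, forall v, iter p (br x) v = 0.
Proof.
move=> Hx.
have H1 : forall h, exists n, iter n (br x) h = 0.
  move=> h; have [n Hn] := Hx h.
  set S := lie_gen br h x in Hn.
  have sub0 : forall k, (<<[:: h; x]>> <= gen_iter br h x k)%VS.
    elim=> [|k IH] /=; first exact: subvv.
    exact: subv_trans IH (addvSl _ _).
  have hS : h \in S by apply: (subvP (sub0 _)); apply: memv_span; rewrite mem_head.
  have xS : x \in S by apply: (subvP (sub0 _)); apply: memv_span; rewrite !inE eqxx orbT.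
  have : forall n0, iter n0 (br x) h \in lcs br S n0.
    elim=> [|n0 IH] //=; exact: mem_brs.
  move/(_ n); rewrite Hn memv0 => /eqP H0; by exists n.
have H2 : forall s : seq V, exists p, forall h, h \in s -> iter p (br x) h = 0.
  elim=> [|a s [p Hp]]; first by exists 0%N.
  have [n Hn] := H1 a.
  exists (maxn p n) => h; rewrite inE => /orP [/eqP -> | hs].
    by rewrite -(subnK (leq_maxr p n)) iterD Hn (iter0v hL).
  by rewrite -(subnK (leq_maxl p n)) iterD Hp // (iter0v hL).
have [p Hp] := H2 (vbasis (fullv : {vspace V})).
exists p => v.
have Hv : v \in <<vbasis (fullv : {vspace V})>>%VS by rewrite (span_basis (vbasisP _)) memvf.
move: v Hv; apply: (span_ind (P := fun v => iter p (br x) v = 0)) => //.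
- exact: (iter0v hL).
- by move=> u w Hu Hw; rewrite (iterDv hL) Hu Hw addr0.
- by move=> c u Hu; rewrite (iterZv hL) Hu scaler0.
Qed.

Variable N : {vspace V}.
Hypothesis hNid : lie_ideal br N.

Lemma Nk_ideal k y w : w \in lcs br N k -> br y w \in lcs br N k.
Proof.
elim: k y w => [|k IH] y w /=.
  by move=> Hw; apply: (subvP hNid); apply: mem_brs => //; exact: memvf.
move: w; apply: (brs_ind (P := fun w => br y w \in brs br N (lcs br N k))) => //.
- by rewrite (br0r hL) mem0v.
- by move=> u v Hu Hv; rewrite (brDr hL) memvD.
- by move=> c u Hu; rewrite (brZr hL) memvZ.
move=> a b Ha Hb.
have J := lie_jacobi hL y a b.
have -> : br y (br a b) = - (br a (br b y) + br b (br y a)).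
  by apply/eqP; rewrite -subr_eq0 opprK addrA J.
rewrite opprD [br b y](brC hL) brNr opprK [br b (br y a)](brC hL) opprK.
apply: memvD; apply: mem_brs => //; first exact: IH.
by apply: (subvP hNid); apply: mem_brs => //; exact: memvf.
Qed.

Lemma Nk_sub k : (lcs br N k.+1 <= lcs br N k)%VS.
Proof.
elim: k => [|k IH] /=.
  apply: brs_sub => a b Ha Hb; exact: (@Nk_ideal 0 a b Hb).
exact: brs_mono (subvv _) IH.
Qed.

Lemma iter_Nk x k j v : v \in lcs br N k -> iter j (br x) v \in lcs br N k.
Proof. by move=> Hv; elim: j => //= j IH; apply: Nk_ideal. Qed.

Variable x : V.
Hypothesis L2N : (brs br fullv fullv <= N)%VS.
Variable p : nat.
Hypothesis hp : forall v, iter p (br x) v = 0.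

Let K := (N + <[x]>)%VS.

Definition form k j w := exists m v, [/\ m \in lcs br N k.+1, v \in lcs br N k &
   w = m + iter j (br x) v].

Lemma stepj k j n : (forall w, w \in lcs br K n -> form k j w) ->
  forall w, w \in lcs br K n.+1 -> form k j.+1 w.
Proof.
move=> H /=; apply: (brs_ind (P := form k j.+1)) => //.
- by exists 0, 0; rewrite !mem0v (iter0v hL) addr0.
- move=> u w [m [v [Hm Hv ->]]] [m' [v' [Hm' Hv' ->]]].
  exists (m + m'), (v + v'); split; rewrite ?memvD //.
  by rewrite (iterDv hL) addrACA.
- move=> c u [m [v [Hm Hv ->]]]; exists (c *: m), (c *: v); split; rewrite ?memvZ //.
  by rewrite (iterZv hL) scalerDr.
move=> a u /memv_addP [n0 Hn [t /vlineP [c ->] ->]] /H [m [v [Hm Hv ->]]].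
exists (br n0 m + br n0 (iter j (br x) v) + c *: br x m), (c *: v); split.
- rewrite !memvD ?memvZ //; try exact: Nk_ideal.
  by apply: mem_brs => //; apply: iter_Nk.
- by rewrite memvZ.
rewrite (brDl hL) !(brDr hL) (brZl hL) (iterZv hL) /=.
by rewrite (brZl hL) !addrA.
Qed.

Lemma iterj j k n : (forall w, w \in lcs br K n -> form k 0 w) ->
  forall w, w \in lcs br K (j + n) -> form k j w.
Proof.
move=> H; elim: j => [|j IH] //.
rewrite addSn; exact: stepj.
Qed.

Lemma outer k w : w \in lcs br K (k * p).+1 -> form k 0 w.
Proof.
elim: k w => [|k IH] w.
  rewrite mul0n /= => Hw; exists 0, w; split; rewrite ?mem0v ?add0r //.
  apply: (subvP L2N); apply: (subvP (brs_mono hL (subvf _) (subvf _))); exact: Hw.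
rewrite mulSn -addnS => /(iterj IH) [m [v [Hm Hv ->]]].
by exists 0, m; rewrite hp addr0 mem0v add0r.
Qed.

Lemma K_nil : lie_nilpotent br N -> lie_nilpotent br K.
Proof.
move=> [r Hr]; exists (r * p).+1.
apply/eqP; rewrite -subv0; apply/subvP => w /outer [m [v [Hm Hv ->]]].
move: Hv Hm; rewrite Hr memv0 => /eqP ->.
move/(subvP (Nk_sub r)); rewrite Hr memv0 => /eqP ->.
by rewrite (iter0v hL) addr0 mem0v.
Qed.

End Main.

Theorem lemma3p5 (F : fieldType) (V : vectType F) (br : V -> V -> V)
  (hL : lie_bracket br) (hcs : completely_solvable br)
  (N : {vspace V}) (hN : is_nilradical br N) :
  forall x : V, nil_set br x -> x \in N.
Proof.
move=> x Hx; case: hN => hNid hNn hNmax.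
have L2N : (brs br fullv fullv <= N)%VS.
  apply: hNmax => //; rewrite /lie_ideal; apply: brs_sub => a b _ _.
  by apply: mem_brs => //; exact: memvf.
have [p hp] := adx_nil hL Hx.
have Kid : lie_ideal br (N + <[x]>)%VS.
  apply: subv_trans (addvSl _ _); apply: subv_trans L2N.
  exact: brs_mono (subvv _) (subvf _).
have := hNmax _ Kid (K_nil hL hNid L2N hp hNn).
move/subvP; apply; apply: (subvP (addvSr N <[x]>%VS)); exact: memv_line.
Qed.
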